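(* Let $G$ be a finitely generated group, $K$ a subgroup of $G$, $\Sigma$ a finite alphabet and $\psi:\Sigma\to G$ a map such that $\psi(\Sigma)$ generates $G$ as a semigroup. Then the word problem $L(G,K,\psi)=\{w\in\Sigma^*:\psi(w)\in K\}$ is growth sensitive, i.e. for every finite non-empty set $F\subset\Sigma^+$ consisting of factors of elements of $L(G,K,\psi)$ one has $\mathsf h(L(G,K,\psi)^F)<\mathsf h(L(G,K,\psi))$.
   Context: $\psi$ is extended to a monoid homomorphism $\Sigma^*\to G$ by $\psi(a_1\cdots a_n)=\psi(a_1)\cdots\psi(a_n)$ and $\psi(\epsilon)=1_G$. $\Sigma^+=\Sigma^*\setminus\{\epsilon\}$; a factor of $a_1\cdots a_n$ is a word $a_i\cdots a_j$ with $1\le i\le j\le n$. For $L\subset\Sigma^*$, $\mathsf h(L)=\limsup_{n\to\infty}\frac1n\log|\{w\in L:|w|=n\}|$ and $L^F=\{w\in L:\text{no }v\in F\text{ is a factor of }w\}$. *)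

(* Defs.v *)
From HB Require Import structures.
From mathcomp Require Import all_boot all_order all_algebra.
From mathcomp Require Import monoid.
From mathcomp Require Import boolp classical_sets reals ereal sequences exp.
Set Implicit Arguments. Unset Strict Implicit. Unset Printing Implicit Defensive.
Import Order.TTheory GRing.Theory Num.Theory.

Definition psi_word (Sigma : finType) (G : groupType) (psi : Sigma -> G)
  (w : seq Sigma) : G :=
  foldr (fun a g => (psi a * g)%g) 1%g w.

Definition is_subgroup (G : groupType) (K : set G) : Prop :=
  K 1%g /\ (forall x y, K x -> K y -> K (x * y)%g) /\ (forall x, K x -> K x^-1%g).

Definition generates_as_semigroup (Sigma : finType) (G : groupType)
  (psi : Sigma -> G) : Prop :=
  forall g : G, exists w : seq Sigma, w != [::] /\ psi_word psi w = g.

Definition word_problem (Sigma : finType) (G : groupType) (K : set G)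
  (psi : Sigma -> G) : set (seq Sigma) :=
  [set w | K (psi_word psi w)].

Definition is_factor (Sigma : eqType) (v w : seq Sigma) : Prop :=
  v != [::] /\ infix v w.

Definition avoid (Sigma : eqType) (L : set (seq Sigma)) (F : seq (seq Sigma))
  : set (seq Sigma) :=
  [set w | L w /\ forall v, v \in F -> ~ is_factor v w].

Definition count_len (Sigma : finType) (L : set (seq Sigma)) (n : nat) : nat :=
  #|[set t : n.-tuple Sigma | `[< L (tval t) >]]|.

Definition growth (R : realType) (Sigma : finType) (L : set (seq Sigma)) : \bar R :=
  limn_esup (fun n : nat =>
    if count_len L n == 0%N then -oo%E
    else ((n%:R)^-1 * ln ((count_len L n)%:R : R))%R%:E).

(* Main.v *)
Require Import Defs.
From HB Require Import structures.
From mathcomp Require Import all_boot all_order all_algebra.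
From mathcomp Require Import monoid.
From mathcomp Require Import boolp classical_sets reals ereal sequences exp.
From mathcomp Require Import topology normedtype.
From mathcomp Require Import ring lra zify.
Set Implicit Arguments. Unset Strict Implicit. Unset Printing Implicit Defensive.
Section Comb.
Variables (Sigma : finType) (G : groupType) (psi : Sigma -> G).

Lemma psi_cat (w1 w2 : seq Sigma) :
  psi_word psi (w1 ++ w2) = (psi_word psi w1 * psi_word psi w2)%g.
Proof.
elim: w1 => [|a w IH] /=; first by rewrite mul1g.
by rewrite /psi_word /= -/(psi_word psi _) IH mulgA.
Qed.

Variable z : seq Sigma.
Variable r : nat.

Fixpoint build (cs : seq nat) (w : seq Sigma) : seq Sigma :=
  match cs with
  | [::] => w
  | c :: cs' => take (c * size z) (take (r * size z) w) ++ z ++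
                drop (c * size z) (take (r * size z) w)
                 ++ build cs' (drop (r * size z) w)
  end.

Lemma psi_build cs w : psi_word psi z = 1%g ->
  psi_word psi (build cs w) = psi_word psi w.
Proof.
move=> hz; elim: cs w => [|c cs IH] w //=.
rewrite !psi_cat IH hz mul1g mulgA -!psi_cat cat_take_drop.
by rewrite -[in RHS](cat_take_drop (r * size z) w).
Qed.

Lemma size_build cs w : size cs * (r * size z) <= size w ->
  size (build cs w) = size w + size cs * size z.
Proof.
elim: cs w => [|c cs IH] w /=; first by rewrite addn0.
move=> hs.
rewrite mulSn in hs.
rewrite !size_cat IH; last by rewrite size_drop; move: hs; set k := r * size z; set q := size cs * k; lia.
rewrite !size_take size_drop !size_take.
move: hs; set k := r * size z; set q := size cs * k; set cm := c * size z.
rewrite mulSn size_drop => hs; repeat case: ifP; lia.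
Qed.

Lemma no_lt c c' w w' t t' : c < c' -> c' <= r ->
  r * size z <= size w -> r * size z <= size w' ->
  take (c * size z) (take (r * size z) w) ++ z ++ t =
  take (c' * size z) (take (r * size z) w') ++ t' -> infix z w'.
Proof.
move=> lt le hw hw' E.
have hcr : c * size z <= r * size z by rewrite leq_mul2r; apply/orP; right; lia.
have hcr' : c' * size z <= r * size z by rewrite leq_mul2r; apply/orP; right; lia.
have le2 : c * size z + size z <= c' * size z.
  by rewrite addnC -mulSn leq_mul2r; apply/orP; right; lia.
have s1 : size (take (c * size z) (take (r * size z) w)) = c * size z.
  rewrite !size_take; move: hcr hw; set a := c * size z; set b := r * size z.
  repeat case: ifP; lia.
have s1' : size (take (c' * size z) (take (r * size z) w')) = c' * size z.
  rewrite !size_take; move: hcr' hw'; set a := c' * size z; set b := r * size z.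
  repeat case: ifP; lia.
have : infix z (take (c' * size z) (take (r * size z) w')).
  rewrite -[X in infix _ X](take_size_cat t' s1') -E take_cat s1 ifN; last lia.
  rewrite take_cat ifN; last lia.
  by rewrite catA; apply: infix_catr; apply: suffix_infix.
move=> h; apply: (infix_trans h); apply: (infix_trans (infix_take _ _)).
exact: infix_take.
Qed.

Lemma build_inj v cs : forall cs' w w', infix v z ->
  all (fun c => c < r) cs -> all (fun c => c < r) cs' ->
  size cs = size cs' -> size w = size w' ->
  size cs * (r * size z) <= size w ->
  ~~ infix v w -> ~~ infix v w' ->
  build cs w = build cs' w' -> cs = cs' /\ w = w'.
Proof.
elim: cs => [|c cs IH] [|c' cs'] w w' //= hv.
move=> /andP[hc hcs] /andP[hc' hcs'] [hsz] hw hsw nw nw'.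
rewrite mulSn in hsw.
have hr : r * size z <= size w by apply: leq_trans hsw; apply: leq_addr.
have hr' : r * size z <= size w' by rewrite -hw.
have [lt|gt|eq] := ltngtP c c'.
- move=> E; have /(infix_trans hv) := no_lt lt (ltnW hc') hr hr' E.
  by rewrite (negbTE nw').
- move=> E; have /(infix_trans hv) := no_lt gt (ltnW hc) hr' hr (esym E).
  by rewrite (negbTE nw).
subst c'.
have hcr : c * size z <= r * size z by rewrite leq_mul2r; apply/orP; right; lia.
have sA : forall u : seq Sigma, r * size z <= size u ->
    size (take (c * size z) (take (r * size z) u)) = c * size z.
  move=> u hu; rewrite !size_take; move: hcr hu; set a := c * size z;
  set b := r * size z; repeat case: ifP; lia.
have sB : forall u : seq Sigma, r * size z <= size u ->
    size (drop (c * size z) (take (r * size z) u)) = r * size z - c * size z.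
  move=> u hu; rewrite size_drop size_take; move: hcr hu; set a := c * size z;
  set b := r * size z; repeat case: ifP; lia.
move/eqP; rewrite eqseq_cat ?sA // => /andP[/eqP e1].
rewrite eqseq_cat // eqxx /= eqseq_cat ?sB // => /andP[/eqP e2 /eqP e3].
have [IH1 IH2] := IH cs' (drop (r * size z) w) (drop (r * size z) w') hv hcs hcs'
  hsz ltac:(by rewrite !size_drop hw)
  ltac:(by rewrite size_drop leq_subRL)
  ltac:(apply: contraNN nw => h; apply: infix_trans h (infix_drop _ _))
  ltac:(apply: contraNN nw' => h; apply: infix_trans h (infix_drop _ _)) e3.
split; first by rewrite IH1.
rewrite -(cat_take_drop (r * size z) w) -(cat_take_drop (r * size z) w') IH2.
rewrite -(cat_take_drop (c * size z) (take (r * size z) w)) e1 e2.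
by rewrite (cat_take_drop (c * size z)).
Qed.
End Comb.

Lemma count_ineq (Sigma : finType) (G : groupType) (psi : Sigma -> G)
  (K : set G) (F : seq (seq Sigma)) (z v : seq Sigma) (r g n : nat) (x0 : Sigma) :
  psi_word psi z = 1%g -> infix v z -> v \in F -> v != [::] ->
  g * (r * size z) <= n ->
  r ^ g * count_len (avoid (word_problem K psi) F) n <=
  count_len (word_problem K psi) (n + g * size z).
Proof.
move=> hz hv vF v0 hg.
pose N := n + g * size z.
pose t0 : N.-tuple Sigma := nseq_tuple N x0.
pose f (p : n.-tuple Sigma * g.-tuple 'I_r) : N.-tuple Sigma :=
  insubd t0 (build z r (map val (tval p.2)) (tval p.1)).
have fE : forall p, tval (f p) = build z r (map val (tval p.2)) (tval p.1).
  move=> [t c]; rewrite /f val_insubd size_build.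
    by rewrite size_tuple size_map size_tuple eqxx.
  by rewrite size_map !size_tuple.
set A := [set t : n.-tuple Sigma | `[< avoid (word_problem K psi) F (tval t) >]].
set B := [set t : N.-tuple Sigma | `[< word_problem K psi (tval t) >]].
set P := finset.setX A [set: g.-tuple 'I_r].
have cP : #|P| = r ^ g * #|A|.
  by rewrite cardsX cardsT card_tuple card_ord mulnC.
rewrite /count_len -/A -/B -cP.
have <- : #|f @: P| = #|P|.
  apply: card_in_imset => [[t c]] [t' c'] /setXP[tA _] /setXP[t'A _] /= E.
  have := congr1 (@tval _ _) E; rewrite !fE => E'.
  move: tA t'A; rewrite /A !inE => -[_ nt] [_ nt']; simpl in E'.
  have nv : forall u : seq Sigma, (forall v, v \in F -> ~ is_factor v u) -> ~~ infix v u.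
    by move=> u hu; apply/negP => hi; apply: (hu v vF); split.
  have amo : forall cc : g.-tuple 'I_r, all (fun x => x < r) (map val (tval cc)).
    by move=> cc; apply/allP => x /mapP[i _ ->]; exact: ltn_ord.
  have h1 : size (map val (tval c)) = size (map val (tval c')).
    by rewrite !size_map !size_tuple.
  have h2 : size (tval t) = size (tval t') by rewrite !size_tuple.
  have h3 : size (map val (tval c)) * (r * size z) <= size (tval t).
    by rewrite size_map !size_tuple.
  have [e1 e2] := build_inj hv (amo c) (amo c') h1 h2 h3 (nv _ nt) (nv _ nt') E'.
  congr (_, _); first exact: val_inj.
  by apply: val_inj; apply: (inj_map val_inj).
apply: subset_leq_card; apply/fintype.subsetP => _ /imsetP[[t c] /setXP[tA _] ->].
move: tA; rewrite /A /B !inE => -[tL _].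
by rewrite /word_problem /= fE psi_build.
Qed.

Section Analytic.
Import Order.TTheory GRing.Theory Num.Theory.
Local Open Scope ring_scope.
Local Open Scope ereal_scope.

Lemma key_limsup (R : realType) (X Y : nat -> \bar R) (f : nat -> nat)
  (n0 : nat) (d s : R) :
  (0 < d)%R ->
  (forall n, (n0 <= n)%N -> (n <= f n)%N /\ X n + d%:E <= Y (f n)) ->
  (forall k, Y k <= s%:E) ->
  (forall n, exists k, (n <= k)%N /\ 0 <= Y k) ->
  limn_esup X < limn_esup Y.
Proof.
move=> d0 H1 H2 H3.
have dfin : d%:E \is a fin_num by [].
have S1 : forall n, (n0 <= n)%N -> esups X n <= esups Y n - (d%:E).
  move=> n nn0; apply: ge_ereal_sup => _ [k nk <-].
  have [fk hk] := H1 k (leq_trans nn0 nk).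
  rewrite leeBrDr //; apply: (le_trans hk).
  by apply: ereal_sup_ubound; exists (f k) => //=; apply: leq_trans nk fk.
have S2 : forall n, limn_esup X <= esups X n.
  move=> n; rewrite limn_esup_lim; apply: lime_le; first exact: is_cvg_esups.
  near=> m; apply: nonincreasing_esups.
  by near: m; exists n.
have S3 : forall n, limn_esup X + d%:E <= esups Y n.
  move=> n; rewrite -leeBrDr //.
  have [nn0|nn0] := leqP n0 n.
    exact: le_trans (S2 n) (S1 n nn0).
  apply: le_trans (S2 n0) _; apply: le_trans (S1 n0 (leqnn _)) _.
  by apply: leeB => //; apply: nonincreasing_esups; apply: ltnW.
have U : limn_esup X + d%:E <= limn_esup Y.
  rewrite [limn_esup Y]limn_esup_lim; apply: lime_ge; first exact: is_cvg_esups.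
  by apply: nearW.
have Y0 : 0 <= limn_esup Y.
  rewrite limn_esup_lim; apply: lime_ge; first exact: is_cvg_esups.
  apply: nearW => n; have [k [nk Yk]] := H3 n.
  by apply: le_trans Yk _; apply: ereal_sup_ubound; exists k.
have Ys : limn_esup Y <= s%:E.
  rewrite limn_esup_lim; apply: lime_le; first exact: is_cvg_esups.
  apply: nearW => n; apply: ge_ereal_sup => _ [k _ <-]; exact: H2.
have Yfin : limn_esup Y \is a fin_num.
  by rewrite fin_numE; apply/andP; split; apply/eqP => E; move: Y0 Ys; rewrite E.
move: U; case: (limn_esup X) => [x| |] U.
- by apply: lt_le_trans U; rewrite lteDl.
- by move: U; rewrite addye // leye_eq => /eqP E; move: Yfin; rewrite E.
- by rewrite ltNye; move: Yfin; rewrite fin_numE => /andP[].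
Unshelve. all: by end_near.
Qed.
End Analytic.

Section RealPart.
Import Order.TTheory GRing.Theory Num.Theory.
Local Open Scope ring_scope.

Lemma real_core (R : realFieldType) (n g m M c l al be de K : R) :
  0 < n -> 0 <= g -> 0 <= m -> M = n + g * m ->
  be * n <= al * M - g * c - g * m * l -> al <= l ->
  n <= K * g -> de * K = c -> 0 <= de -> be + de <= al.
Proof.
move=> n0 g0 m0 -> h1 h2 h3 h4 d0.
have e1 : g * m * (al - l) <= 0.
  by rewrite mulr_ge0_le0 ?mulr_ge0 // subr_le0.
have e2 : de * n <= de * (K * g) by rewrite ler_wpM2l.
have e3 : n * (be + de - al) <= 0 by rewrite -h4 in h1; nra.
rewrite -subr_le0; move: e3; rewrite pmulr_rle0 //; lra.
Qed.

Lemma real_ineq (R : realType) (n g m r a b N : nat) :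
  (0 < n)%N -> (0 < m)%N -> (n <= 2 * r * m * g)%N -> (0 < b)%N ->
  (r ^ g * b <= a)%N -> (a <= N ^ (n + g * m))%N -> r = (2 * N ^ m)%N -> (0 < N)%N ->
  (n%:R^-1 * ln (b%:R : R) + ln (2 : R) / (2 * r * m)%:R <=
   ((n + g * m)%:R)^-1 * ln (a%:R : R)).
Proof.
move=> n0 m0 hK b0 hra haN hr N0.
have r0 : (0 < r)%N by rewrite hr muln_gt0 expn_gt0 N0.
have rg0 : (0 < r ^ g)%N by rewrite expn_gt0 r0.
have rgb : (0 < r ^ g * b)%N by rewrite muln_gt0 rg0 b0.
have a0 := leq_trans rgb hra.
have pos : forall k : nat, (0 < k)%N -> (k%:R : R) \is Num.pos.
  by move=> k k0; rewrite posrE ltr0n.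
have M0 : (0 < n + g * m)%N by rewrite addn_gt0 n0.
have Kpos : (0 < 2 * r * m)%N by rewrite !muln_gt0 r0 m0.
apply: (@real_core R n%:R g%:R m%:R (n + g * m)%:R (ln 2) (ln N%:R) _ _ _ (2 * r * m)%:R).
- by rewrite ltr0n.
- by rewrite ler0n.
- by rewrite ler0n.
- by rewrite natrD natrM.
- rewrite mulrAC mulVf ?mul1r ?pnatr_eq0 -?lt0n //.
  rewrite mulrAC mulVf ?mul1r ?pnatr_eq0 -?lt0n //.
  have hlr : ln (r%:R : R) = ln 2 + m%:R * ln N%:R.
    rewrite hr natrM lnM ?(pos 2%N) ?pos ?expn_gt0 ?N0 // natrX lnXn ?ltr0n //.
    by rewrite mulr_natl.
  have : ln ((r ^ g * b)%:R : R) <= ln a%:R.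
    by rewrite ler_ln ?ler_nat ?pos.
  rewrite natrM lnM ?pos ?expn_gt0 ?r0 // natrX lnXn ?ltr0n // hlr.
  rewrite -mulr_natl; lra.
- rewrite ler_pdivrMl ?ltr0n //.
  have : ln (a%:R : R) <= ln (N ^ (n + g * m))%:R.
    by rewrite ler_ln ?ler_nat ?pos // expn_gt0 N0.
  by rewrite natrX lnXn ?ltr0n // mulr_natl.
- by rewrite -natrM ler_nat.
- by rewrite divfK // pnatr_eq0 -lt0n.
- by rewrite divr_ge0 // ln_ge0 // ler1n.
Qed.
End RealPart.
Import Order.TTheory GRing.Theory Num.Theory.

Lemma count_le_card (Sigma : finType) (L : set (seq Sigma)) k :
  (count_len L k <= #|Sigma| ^ k)%N.
Proof.
rewrite /count_len; apply: leq_trans (subset_leq_card (finset.subsetT _)) _.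
by rewrite cardsT card_tuple.
Qed.

Lemma count_pow_pos (Sigma : finType) (G : groupType) (psi : Sigma -> G)
  (K : set G) (z : seq Sigma) j :
  K 1%g -> psi_word psi z = 1%g ->
  (0 < count_len (word_problem K psi) (j * size z))%N.
Proof.
move=> K1 hz.
have szz : forall j, size (iter j (cat z) [::]) == j * size z.
  elim=> [//|i IH] /=; rewrite size_cat (eqP IH) mulSn //.
have pzz : forall j, psi_word psi (iter j (cat z) [::]) = 1%g.
  elim=> [//|i IH] /=; by rewrite psi_cat IH hz mul1g.
rewrite /count_len; apply/card_gt0P; exists (Tuple (szz j)).
by rewrite inE /word_problem /=; apply/asboolP; rewrite pzz.
Qed.

Theorem mainTheorem17 (R : realType) (G : groupType) (K : set G)
  (Sigma : finType) (psi : Sigma -> G) :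
  is_subgroup K ->
  generates_as_semigroup psi ->
  forall F : seq (seq Sigma),
    F != [::] ->
    (forall v, v \in F ->
       v != [::] /\ exists w, word_problem K psi w /\ is_factor v w) ->
    (growth R (avoid (word_problem K psi) F) < growth R (word_problem K psi))%E.
Proof.
move=> [K1 _] hgen F F0 hF.
case: F F0 hF => [//|v F'] _ hF.
have vF : v \in v :: F' by rewrite mem_head.
have [v0 _] := hF v vF.
have [x0 _] : exists x0, x0 \in v by case: v v0 {vF hF} => // x s _; exists x; rewrite mem_head.
have [u [u0 hu]] := hgen ((psi_word psi v)^-1)%g.
pose z := v ++ u.
have hz : psi_word psi z = 1%g by rewrite psi_cat hu mulgV.
have hv : infix v z := prefix_infix v u.
have m0 : (0 < size z)%N by rewrite size_cat addn_gt0 lt0n size_eq0 v0.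
pose N := #|Sigma|.
have N0 : (0 < N)%N by apply/card_gt0P; exists x0.
pose r := (2 * N ^ size z)%N.
have r0 : (0 < r)%N by rewrite muln_gt0 expn_gt0 N0.
have rm0 : (0 < r * size z)%N by rewrite muln_gt0 r0 m0.
rewrite /growth.
apply: (@key_limsup R _ _ (fun n => n + (n %/ (r * size z)) * size z)%N (r * size z)
  (ln 2 / (2 * r * size z)%:R)%R (ln N%:R)).
- have K0 : (0 < 2 * r * size z)%N by rewrite -mulnA muln_gt0 rm0.
  by apply: divr_gt0; [apply: ln_gt0; rewrite ltr1n | rewrite ltr0n].
- move=> n hn; split; first exact: leq_addr.
  set g := (n %/ (r * size z))%N.
  have hg : (g * (r * size z) <= n)%N by apply: leq_trunc_div.
  have g1 : (0 < g)%N by rewrite divn_gt0.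
  have hc := count_ineq K x0 hz hv vF v0 hg.
  case: eqP => hb; first by rewrite addNye leNye.
  case: eqP => ha.
    exfalso; move: hc; rewrite ha leqn0 muln_eq0 expn_eq0 => /orP[/andP[/eqP r00 _]|/eqP //].
    by move: r0; rewrite r00.
  rewrite -EFinD lee_fin.
  apply: real_ineq => //.
  + by apply: leq_trans rm0 hn.
  + have := ltn_pmod n rm0; have := divn_eq n (r * size z); rewrite -/g.
    rewrite -mulnA; set q := (r * size z)%N; nia.
  + by rewrite lt0n; apply/eqP.
  + exact: count_le_card.
- move=> k; case: ifP => ha; first exact: leNye.
  rewrite lee_fin; have [->|k0] := posnP k.
    by rewrite invr0 mul0r ln_ge0 // ler1n.
  rewrite ler_pdivrMl ?ltr0n //.
  have a0 : (0 < count_len (word_problem K psi) k)%N by rewrite lt0n ha.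
  have : (ln ((count_len (word_problem K psi) k)%:R : R) <= ln ((N ^ k)%:R : R))%R.
    by rewrite ler_ln ?posrE ?ltr0n ?expn_gt0 ?N0 // ler_nat count_le_card.
  by rewrite natrX lnXn ?ltr0n // mulr_natl.
- move=> n; exists (n * size z)%N; split; first by rewrite leq_pmulr.
  have hp := count_pow_pos n K1 hz; move: (hp); rewrite lt0n => /negbTE ->.
  rewrite lee_fin; apply: mulr_ge0; first by rewrite invr_ge0.
  by apply: ln_ge0; rewrite ler1n.
Qed.
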